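(* If $\mathrm{Re}(z)<1/2$, then $$z\gamma(z)=-\log(1-z)+\sum_{n=1}^{\infty}\left(\frac{-z}{1-z}\right)^n\sum_{k=0}^{n}(-1)^{k+1}\binom{n}{k}\log(k+1).$$ Equivalently, if $|w|<1$, then $$w\gamma\!\left(\frac{-w}{1-w}\right)=-(1-w)\log(1-w)+(1-w)\sum_{n=1}^{\infty}w^n\sum_{k=0}^{n}(-1)^k\binom{n}{k}\log(k+1).$$
   Context: $\gamma(z)$ is the generalized-Euler-constant function: for $|z|\le1$, $\gamma(z)=\sum_{n=1}^{\infty} z^{n-1}\left(\frac{1}{n}-\log\frac{n+1}{n}\right)$, and for $z\in\mathbb{C}\setminus[1,\infty)$ it denotes the analytic continuation $\gamma(z)=\int_0^1\frac{1-x+\log x}{(1-xz)\log x}\,dx$. $\log$ is the principal branch. *)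

(* Defs.v *)
From Stdlib Require Import Reals Binomial.
From Coquelicot Require Import Coquelicot.

Open Scope R_scope.

(* Principal argument Arg z in (-PI, PI]. *)
Definition Carg (z : C) : R :=
  let x := Re z in let y := Im z in
  if Rlt_dec 0 x then atan (y / x)
  else if Rlt_dec x 0 then
    (if Rle_dec 0 y then atan (y / x) + PI else atan (y / x) - PI)
  else if Rlt_dec 0 y then PI / 2
  else if Rlt_dec y 0 then - (PI / 2)
  else 0.

(* Principal branch of the complex logarithm (Clog 0 = ln 0 = 0 by convention, never used). *)
Definition Clog (z : C) : C := (ln (Cmod z), Carg z).

Definition gamma_integrand (z : C) (x : R) : C :=
  Cdiv (RtoC (1 - x + ln x)) (Cmult (Cminus (RtoC 1) (Cmult (RtoC x) z)) (RtoC (ln x))).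

(* gamma(z) = int_0^1 (1 - x + log x) / ((1 - x z) log x) dx, for z in C \ [1, oo).
   The integrand is bounded on (0,1) (limits 1 at 0 and 0 at 1), so this is a
   proper Riemann integral of a C-valued function. *)
Definition gamma_fun (z : C) : C :=
  @RInt C_R_CompleteNormedModule (gamma_integrand z) 0 1.

Definition inner_sum1 (n : nat) : R :=
  sum_f_R0 (fun k => (-1) ^ (k + 1) * Binomial.C n k * ln (INR k + 1)) n.
Definition inner_sum2 (n : nat) : R :=
  sum_f_R0 (fun k => (-1) ^ k * Binomial.C n k * ln (INR k + 1)) n.

(* Main.v *)
Require Import Defs.
From Stdlib Require Import Reals Binomial Lra Lia.
From Coquelicot Require Import Coquelicot.
Open Scope R_scope.

Lemma cont_eps (f : R -> R) x :
  (forall eps, 0 < eps -> exists d, 0 < d /\ forall v, Rabs (v - x) < d -> Rabs (f v - f x) < eps) ->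
  continuous f x.
Proof.
  intros H. apply continuity_pt_filterlim.
  intros eps Heps. destruct (H eps Heps) as [d [Hd Hv]]. exists d; split; auto.
  intros v [_ Hv']. simpl in *. unfold R_dist in *. apply Hv; auto.
Qed.

Lemma loc_ball (P : R -> Prop) x d : 0 < d -> (forall v, Rabs (v - x) < d -> P v) -> locally x P.
Proof.
  intros Hd H. exists (mkposreal d Hd). intros v Hv. apply H. exact Hv.
Qed.

Definition rp (s x : R) : R := if Rle_dec x 0 then 0 else exp (s * ln x).
Definition hh (s x : R) : R :=
  if Rle_dec x 0 then 0 else if Req_EM_T x 1 then s else (exp (s * ln x) - 1) / ln x.

Lemma ln_neq0 x : 0 < x -> x <> 1 -> ln x <> 0.
Proof. intros H1 H2 H3. apply H2. rewrite <- (exp_ln x H1), H3, exp_0. reflexivity. Qed.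

Lemma hh_deriv s x : is_derive (fun u => hh u x) s (rp s x).
Proof.
  unfold hh, rp. destruct (Rle_dec x 0).
  - apply (is_derive_const 0).
  - destruct (Req_EM_T x 1).
    + subst. rewrite ln_1, Rmult_0_r, exp_0. apply (is_derive_id s).
    + assert (Hl : ln x <> 0) by (apply ln_neq0; lra).
      auto_derive. auto. field. auto.
Qed.

Lemma cont_of_deriv (f : R -> R) x : ex_derive f x -> continuous f x.
Proof. intros H. apply (ex_derive_continuous (K:=R_AbsRing) (V:=R_NormedModule)). exact H. Qed.
Lemma cpt_of_cont f x : continuous f x -> continuity_pt f x.
Proof. intros H; apply continuity_pt_filterlim; exact H. Qed.

Lemma rp_cont2 s t : 0 < s -> continuity_2d_pt rp s t.
Proof.
  intros Hs.
  destruct (Rtotal_order t 0) as [Ht|[Ht|Ht]].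
  - intros eps. assert (Hd : 0 < - t) by lra. exists (mkposreal _ Hd). simpl.
    intros u v _ Hv. unfold rp.
    destruct (Rle_dec v 0); [|exfalso; apply Rabs_def2 in Hv; lra].
    destruct (Rle_dec t 0); [|lra]. rewrite Rminus_0_r, Rabs_R0. apply cond_pos.
  - subst t. intros eps.
    set (e' := Rmin eps (1/2)).
    assert (He' : 0 < e') by (unfold e'; apply Rmin_pos; [apply cond_pos|lra]).
    assert (He'1 : e' <= 1/2) by (unfold e'; apply Rmin_r).
    assert (Hle : ln e' < 0) by (rewrite <- ln_1; apply ln_increasing; lra).
    set (d := Rmin (s/2) (exp ((2/s) * ln e'))).
    assert (Hd : 0 < d) by (unfold d; apply Rmin_pos; [lra| apply exp_pos]).
    exists (mkposreal d Hd). simpl. intros u v Hu Hv.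
    unfold rp. destruct (Rle_dec 0 0); [|lra].
    destruct (Rle_dec v 0).
    + rewrite Rminus_0_r, Rabs_R0. apply cond_pos.
    + assert (Hv0 : 0 < v) by lra.
      rewrite Rminus_0_r in Hv. rewrite Rabs_right in Hv by lra.
      assert (Hu2 : s/2 < u).
      { assert (Rabs (u - s) < s/2). { eapply Rlt_le_trans; [apply Hu| apply Rmin_l]. }
        apply Rabs_def2 in H. lra. }
      assert (Hv1 : v < exp ((2/s) * ln e')).
      { eapply Rlt_le_trans; [apply Hv| apply Rmin_r]. }
      assert (Hlv : ln v < (2/s) * ln e').
      { rewrite <- (ln_exp ((2/s) * ln e')). apply ln_increasing; auto. }
      assert (Hlv0 : ln v < 0).
      { assert ((2/s) * ln e' < 0). { apply Rmult_pos_neg; auto. apply Rdiv_lt_0_compat; lra. } lra. }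
      rewrite Rminus_0_r, Rabs_right by (left; apply exp_pos).
      apply Rlt_le_trans with e'; [|apply Rmin_l].
      rewrite <- (exp_ln e') by auto. apply exp_increasing.
      apply Rle_lt_trans with ((s/2) * ln v).
      * nra.
      * replace (ln e') with ((s/2) * ((2/s) * ln e')) by (field; lra).
        apply Rmult_lt_compat_l; lra.
  - apply continuity_2d_pt_ext_loc with (f := fun u v => exp (u * ln v)).
    + exists (mkposreal t Ht). simpl. intros u v _ Hv. unfold rp.
      apply Rabs_def2 in Hv. destruct (Rle_dec v 0); [lra|reflexivity].
    + apply continuity_1d_2d_pt_comp.
      * apply derivable_continuous_pt, derivable_pt_exp.
      * apply continuity_2d_pt_mult. apply continuity_2d_pt_id1.
        apply continuity_1d_2d_pt_comp with (f := ln) (g := fun _ v => v).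
        -- apply cpt_of_cont, continuous_ln; auto.
        -- apply continuity_2d_pt_id2.
Qed.
Lemma hh_cont y x : 0 < y -> 0 <= x -> continuous (hh y) x.
Proof.
  intros Hy Hx.
  destruct (Rle_lt_or_eq_dec 0 x Hx) as [Hx0|Hx0].
  - destruct (Req_EM_T x 1) as [Hx1|Hx1].
    + subst x. apply cont_eps. intros eps Heps.
      assert (Hd : derivable_pt_lim (fun u => exp (y * u)) 0 y).
      { apply is_derive_Reals. auto_derive. auto. rewrite Rmult_0_r, exp_0. ring. }
      destruct (Hd eps Heps) as [d1 Hd1].
      assert (Hl := cpt_of_cont _ _ (continuous_ln 1 Rlt_0_1)).
      destruct (Hl d1 (cond_pos d1)) as [d2 [Hd2 Hl2]].
      exists (Rmin d2 (1/2)). split. apply Rmin_pos; lra.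
      intros v Hv.
      assert (Hv2 : Rabs (v - 1) < d2) by (eapply Rlt_le_trans; [apply Hv|apply Rmin_l]).
      assert (Hv3 : Rabs (v - 1) < 1/2) by (eapply Rlt_le_trans; [apply Hv|apply Rmin_r]).
      apply Rabs_def2 in Hv3.
      unfold hh. destruct (Rle_dec 1 0); [lra|]. destruct (Req_EM_T 1 1); [|congruence].
      destruct (Rle_dec v 0); [lra|]. destruct (Req_EM_T v 1).
      * rewrite Rminus_eq_0, Rabs_R0; auto.
      * assert (Hlv : ln v <> 0) by (apply ln_neq0; lra).
        assert (Hlv2 : Rabs (ln v) < d1).
        { specialize (Hl2 v (conj (conj I (fun H => n1 (eq_sym H))) Hv2)). simpl in Hl2. unfold R_dist in Hl2.
          rewrite ln_1, Rminus_0_r in Hl2. exact Hl2. }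
        specialize (Hd1 (ln v) Hlv Hlv2).
        rewrite Rplus_0_l, Rmult_0_r, exp_0 in Hd1. exact Hd1.
    + apply continuous_ext_loc with (g := fun v => (exp (y * ln v) - 1) / ln v).
      * apply loc_ball with (d := Rmin x (Rabs (x - 1))).
        apply Rmin_pos; auto. apply Rabs_pos_lt. lra.
        intros v Hv. unfold hh.
        assert (Hva : Rabs (v - x) < x) by (eapply Rlt_le_trans; [apply Hv|apply Rmin_l]).
        assert (Hvb : Rabs (v - x) < Rabs (x - 1)) by (eapply Rlt_le_trans; [apply Hv|apply Rmin_r]).
        apply Rabs_def2 in Hva.
        destruct (Rle_dec v 0); [lra|]. destruct (Req_EM_T v 1); [|reflexivity].
        subst v. rewrite Rabs_minus_sym in Hvb. lra.
      * apply cont_of_deriv. assert (ln x <> 0) by (apply ln_neq0; auto).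
        auto_derive. repeat split; auto.
  - subst x. apply cont_eps. intros eps Heps.
    exists (Rmin (1/2) (exp (-(2/eps)))). split. apply Rmin_pos; [lra|apply exp_pos].
    intros v Hv. rewrite Rminus_0_r in Hv.
    assert (Hva : Rabs v < 1/2) by (eapply Rlt_le_trans; [apply Hv|apply Rmin_l]).
    assert (Hvb : Rabs v < exp (-(2/eps))) by (eapply Rlt_le_trans; [apply Hv|apply Rmin_r]).
    unfold hh. destruct (Rle_dec 0 0); [|lra]. rewrite Rminus_0_r.
    destruct (Rle_dec v 0). rewrite Rabs_R0; auto.
    apply Rabs_def2 in Hva. rewrite Rabs_right in Hvb by lra.
    destruct (Req_EM_T v 1); [lra|].
    assert (Hl : ln v < -(2/eps)).
    { rewrite <- (ln_exp (-(2/eps))). apply ln_increasing; lra. }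
    assert (H2e : 0 < 2/eps) by (apply Rdiv_lt_0_compat; lra).
    assert (He1 : exp (y * ln v) <= 1).
    { rewrite <- exp_0. destruct (Rle_lt_or_eq_dec (y * ln v) 0) as [Hq|Hq]; [nra|left; apply exp_increasing; exact Hq|rewrite Hq; right; reflexivity]. }
    assert (He0 := exp_pos (y * ln v)).
    assert (HL : 0 < - ln v) by lra.
    replace ((exp (y * ln v) - 1) / ln v) with ((1 - exp (y * ln v)) / (- ln v)) by (field; intro Hq; rewrite Hq in HL; lra).
    rewrite Rabs_right.
    2:{ apply Rle_ge. unfold Rdiv. apply Rmult_le_pos; [lra|left; apply Rinv_0_lt_compat; lra]. }
    apply Rle_lt_trans with (1 / (- ln v)).
    { unfold Rdiv. apply Rmult_le_compat_r; [left; apply Rinv_0_lt_compat; lra | lra]. }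
    apply Rlt_div_l; [lra|].
    assert (eps * (2/eps) = 2) by (field; lra). nra.
Qed.
Lemma cont2_1d f s t : continuity_2d_pt f s t -> continuous (f s) t.
Proof.
  intros H. apply cont_eps. intros eps Heps.
  destruct (H (mkposreal eps Heps)) as [d Hd]. exists d. split. apply cond_pos.
  intros v Hv. apply Hd; auto. rewrite Rminus_eq_0, Rabs_R0. apply cond_pos.
Qed.

Lemma rp_int u : 0 < u -> is_RInt (rp u) 0 1 (/ (u + 1)).
Proof.
  intros Hu.
  set (F := fun t => t * rp u t / (u + 1)).
  assert (HF : is_RInt (rp u) 0 1 (minus (F 1) (F 0))).
  { apply (is_RInt_derive (V:=R_CompleteNormedModule)).
    - intros x Hx. rewrite Rmin_left in Hx by lra. rewrite Rmax_right in Hx by lra.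
      destruct (Rle_lt_or_eq_dec 0 x (proj1 Hx)) as [Hx0|Hx0].
      + apply is_derive_ext_loc with (f := fun t => t * exp (u * ln t) / (u + 1)).
        * apply loc_ball with (d := x); auto. intros v Hv. apply Rabs_def2 in Hv.
          unfold F, rp. destruct (Rle_dec v 0); [lra|reflexivity].
        * unfold rp. destruct (Rle_dec x 0); [lra|].
          auto_derive. auto. field. lra.
      + subst x. apply is_derive_Reals. intros eps Heps.
        destruct (rp_cont2 u 0 Hu (mkposreal eps Heps)) as [d Hd].
        exists d. intros h Hh Hhd.
        unfold F. rewrite Rplus_0_l, Rmult_0_l.
        assert (E0 : rp u 0 = 0) by (unfold rp; destruct (Rle_dec 0 0); [reflexivity|lra]). rewrite E0.
        replace ((h * rp u h / (u + 1) - 0 / (u + 1)) / h - 0) with (rp u h / (u + 1)) by (field; split; lra).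
        specialize (Hd u h). simpl in Hd. rewrite Rminus_eq_0, Rabs_R0, Rminus_0_r in Hd.
        specialize (Hd (cond_pos d) Hhd).
        rewrite E0, Rminus_0_r in Hd.
        unfold Rdiv. rewrite Rabs_mult, Rabs_right with (r := / (u+1)).
        2:{ left. apply Rinv_0_lt_compat. lra. }
        apply Rle_lt_trans with (Rabs (rp u h) * 1); [|lra].
        apply Rmult_le_compat_l. apply Rabs_pos.
        rewrite <- Rinv_1. apply Rinv_le_contravar; lra.
    - intros x Hx. apply cont2_1d, rp_cont2. auto. }
  unfold F, rp in HF. simpl in HF.
  destruct (Rle_dec 1 0); [lra|]. destruct (Rle_dec 0 0); [|lra].
  rewrite ln_1, Rmult_0_r, exp_0 in HF.
  replace (/ (u + 1)) with (minus (1 * 1 / (u + 1)) (0 * 0 / (u + 1))); auto.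
  unfold minus, plus, opp. simpl. field. lra.
Qed.
Lemma Derive_hh s t : Derive (fun z => hh z t) s = rp s t.
Proof. apply is_derive_unique, hh_deriv. Qed.

Lemma hh_exRInt y : 0 < y -> ex_RInt (hh y) 0 1.
Proof.
  intros Hy. apply (ex_RInt_continuous (V:=R_CompleteNormedModule)).
  intros z Hz. rewrite Rmin_left in Hz by lra. apply hh_cont; lra.
Qed.

Lemma P_deriv u : 0 < u -> is_derive (fun s => RInt (hh s) 0 1) u (/ (u + 1)).
Proof.
  intros Hu.
  assert (H := is_derive_RInt_param (fun s t => hh s t) 0 1 u).
  replace (/ (u + 1)) with (RInt (fun t => Derive (fun v => hh v t) u) 0 1).
  - apply H.
    + apply filter_forall. intros x0 t _. exists (rp x0 t). apply hh_deriv.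
    + intros t _. apply continuity_2d_pt_ext with (f := rp).
      intros; rewrite Derive_hh; reflexivity. apply rp_cont2; auto.
    + apply loc_ball with (d := u); auto. intros v Hv. apply Rabs_def2 in Hv.
      apply hh_exRInt. lra.
  - rewrite (RInt_ext _ (rp u)). apply is_RInt_unique, rp_int; auto.
    intros; apply Derive_hh.
Qed.
Lemma hh_bound e x : 0 < e -> x <= 1 -> Rabs (hh e x) <= e.
Proof.
  intros He Hx. unfold hh.
  destruct (Rle_dec x 0). rewrite Rabs_R0; lra.
  destruct (Req_EM_T x 1). rewrite Rabs_right; lra.
  assert (Hl : ln x < 0) by (rewrite <- ln_1; apply ln_increasing; lra).
  assert (H1 := exp_ineq1_le (e * ln x)).
  assert (H2 : exp (e * ln x) <= 1).
  { rewrite <- exp_0. destruct (Rle_lt_or_eq_dec (e * ln x) 0) as [Hq|Hq]; [nra|left; apply exp_increasing; exact Hq|rewrite Hq; right; reflexivity]. }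
  replace ((exp (e * ln x) - 1) / ln x) with ((1 - exp (e * ln x)) / (- ln x)) by (field; intro Hq; rewrite Hq in Hl; lra).
  rewrite Rabs_right.
  2:{ apply Rle_ge. unfold Rdiv. apply Rmult_le_pos; [lra|left; apply Rinv_0_lt_compat; lra]. }
  apply Rle_div_l; lra.
Qed.

Lemma P_small e : 0 < e -> Rabs (RInt (hh e) 0 1) <= e.
Proof.
  intros He.
  assert (H := norm_RInt_le_const (V:=R_NormedModule) (hh e) 0 1 (RInt (hh e) 0 1) e).
  replace e with ((1 - 0) * e) at 2 by ring. apply H. lra.
  intros x Hx. apply hh_bound; lra.
  apply (RInt_correct (V:=R_CompleteNormedModule)), hh_exRInt; auto.
Qed.

Lemma ln1p_bound e : 0 < e -> 0 <= ln (e + 1) <= e.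
Proof.
  intros He. split.
  - rewrite <- ln_1. apply ln_le; lra.
  - rewrite <- (ln_exp e) at 2. apply ln_le. lra. assert (H := exp_ineq1_le e). lra.
Qed.

Lemma P_val u : 0 < u -> RInt (hh u) 0 1 = ln (u + 1).
Proof.
  intros Hu.
  set (g := fun v => RInt (hh v) 0 1 - ln (v + 1)).
  assert (Hg : forall x, 0 < x -> is_derive g x 0).
  { intros x Hx.
    assert (H2 : is_derive (fun v => ln (v + 1)) x (/ (x + 1))).
    { auto_derive. lra. field. lra. }
    assert (Hm := is_derive_minus _ _ _ _ _ (P_deriv x Hx) H2).
    replace 0 with (minus (/ (x + 1)) (/ (x + 1))).
    exact Hm. unfold minus, plus, opp. simpl. ring. }
  assert (Hsmall : forall e, 0 < e < u -> Rabs (g u) <= 2 * e).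
  { intros e He.
    assert (HM := MVT_gen g e u (fun _ => 0)).
    rewrite Rmin_left in HM by lra. rewrite Rmax_right in HM by lra.
    destruct HM as [c [_ Hc]].
    - intros x Hx. apply Hg. lra.
    - intros x Hx. apply cpt_of_cont, cont_of_deriv. exists 0. apply Hg. lra.
    - rewrite Rmult_0_l in Hc. assert (g u = g e) by lra. rewrite H.
      unfold g. assert (H1 := P_small e (proj1 He)). assert (H3 := ln1p_bound e (proj1 He)).
      apply Rle_trans with (Rabs (RInt (hh e) 0 1) + Rabs (ln (e + 1))).
      unfold Rminus. eapply Rle_trans; [apply Rabs_triang|]. rewrite Rabs_Ropp. lra.
      rewrite (Rabs_right (ln (e+1))) by lra. lra. }
  destruct (Req_dec (g u) 0) as [H0|H0].
  - unfold g in H0. lra.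
  - exfalso. assert (Ha := Rabs_pos_lt _ H0).
    set (e := Rmin (u/2) (Rabs (g u) / 4)).
    assert (He1 : e <= Rabs (g u) / 4) by apply Rmin_r.
    assert (He2 : e <= u / 2) by apply Rmin_l.
    assert (He0 : 0 < e) by (apply Rmin_pos; lra).
    specialize (Hsmall e ltac:(lra)). lra.
Qed.
Lemma hh_int k : is_RInt (hh (INR k)) 0 1 (ln (INR k + 1)).
Proof.
  destruct k as [|k].
  - simpl. rewrite Rplus_0_l, ln_1.
    apply is_RInt_ext with (f := fun _ => 0).
    + intros x Hx. unfold hh. destruct (Rle_dec x 0); auto. destruct (Req_EM_T x 1); auto.
      rewrite Rmult_0_l, exp_0. unfold Rdiv. rewrite Rminus_eq_0, Rmult_0_l. reflexivity.
    + assert (Hc := is_RInt_const (V:=R_NormedModule) 0 1 0).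
      change (scal (1-0) 0) with (Rmult (1-0) 0) in Hc. rewrite Rmult_0_r in Hc. exact Hc.
  - rewrite <- P_val by (apply lt_0_INR; lia).
    apply (RInt_correct (V:=R_CompleteNormedModule)), hh_exRInt. apply lt_0_INR; lia.
Qed.

Lemma sum_int (c : nat -> R) N :
  is_RInt (fun x => sum_f_R0 (fun k => c k * hh (INR k) x) N) 0 1
          (sum_f_R0 (fun k => c k * ln (INR k + 1)) N).
Proof.
  induction N as [|N IH].
  - simpl. apply (is_RInt_scal (V:=R_NormedModule) (hh (INR 0)) 0 1 (c 0%nat)).
    apply hh_int.
  - simpl. apply (is_RInt_plus (V:=R_NormedModule)). exact IH.
    apply (is_RInt_scal (V:=R_NormedModule) (hh (INR (S N))) 0 1 (c (S N))).
    apply hh_int.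
Qed.

Lemma sum_split (a b : nat -> R) L n : L <> 0 ->
  sum_f_R0 (fun k => a k * ((b k - 1) / L)) n =
  (sum_f_R0 (fun k => a k * b k) n - sum_f_R0 a n) / L.
Proof.
  intros HL. induction n as [|n IH]; simpl. field; auto.
  rewrite IH. field; auto.
Qed.

Definition Q (x : R) : R := - hh 1 x.

Lemma core m : is_RInt (fun x => (1 - x) ^ m * Q x) 0 1 (inner_sum2 (S m)).
Proof.
  unfold inner_sum2.
  apply is_RInt_ext with (f := fun x => sum_f_R0 (fun k => ((-1) ^ k * Binomial.C (S m) k) * hh (INR k) x) (S m)).
  2: apply sum_int.
  intros x Hx. rewrite Rmin_left in Hx by lra. rewrite Rmax_right in Hx by lra.
  assert (Hl : ln x <> 0) by (apply ln_neq0; lra).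
  rewrite (sum_eq _ (fun k => ((-1) ^ k * Binomial.C (S m) k) * ((x ^ k - 1) / ln x))).
  2:{ intros k _. unfold hh. destruct (Rle_dec x 0); [lra|]. destruct (Req_EM_T x 1); [lra|].
      replace (exp (INR k * ln x)) with (x ^ k); [reflexivity|]. rewrite <- Rpower_pow by lra. reflexivity. }
  rewrite sum_split by auto.
  assert (B1 : sum_f_R0 (fun k => (-1) ^ k * Binomial.C (S m) k * x ^ k) (S m) = (1 - x) ^ (S m)).
  { replace (1 - x) with (- x + 1) by ring. rewrite binomial. apply sum_eq.
    intros i _. rewrite pow1. replace (- x) with ((-1) * x) by ring. rewrite Rpow_mult_distr. ring. }
  assert (B2 : sum_f_R0 (fun k => (-1) ^ k * Binomial.C (S m) k) (S m) = 0).
  { transitivity ((-1 + 1) ^ (S m)).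
    - rewrite binomial. apply sum_eq. intros i _. rewrite pow1. ring.
    - simpl. ring. }
  rewrite B1, B2. unfold Q, hh. destruct (Rle_dec x 0); [lra|]. destruct (Req_EM_T x 1); [lra|].
  rewrite Rmult_1_l, exp_ln by lra. simpl. field. auto.
Qed.


Lemma isC (f : R -> C) a b (l : C) :
  is_RInt (fun t => fst (f t)) a b (fst l) ->
  is_RInt (fun t => snd (f t)) a b (snd l) ->
  @is_RInt C_R_NormedModule f a b l.
Proof. intros H1 H2. destruct l. apply (is_RInt_fct_extend_pair (U:=R_NormedModule) (V:=R_NormedModule)); auto. Qed.
Lemma isC1 (f : R -> C) a b (l : C) :
  @is_RInt C_R_NormedModule f a b l -> is_RInt (fun t => fst (f t)) a b (fst l).
Proof. intros H. apply (is_RInt_fct_extend_fst (U:=R_NormedModule) (V:=R_NormedModule) f). exact H. Qed.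
Lemma isC2 (f : R -> C) a b (l : C) :
  @is_RInt C_R_NormedModule f a b l -> is_RInt (fun t => snd (f t)) a b (snd l).
Proof. intros H. apply (is_RInt_fct_extend_snd (U:=R_NormedModule) (V:=R_NormedModule) f). exact H. Qed.

Lemma is_RInt_zero a b : is_RInt (fun _ => 0) a b 0.
Proof.
  assert (Hc := is_RInt_const (V:=R_NormedModule) a b 0).
  change (scal (b-a) 0) with (Rmult (b-a) 0) in Hc. rewrite Rmult_0_r in Hc. exact Hc.
Qed.

Lemma is_RInt_RtoC (g : R -> R) a b l : is_RInt g a b l ->
  @is_RInt C_R_NormedModule (fun x => RtoC (g x)) a b (RtoC l).
Proof. intros H. apply isC; simpl. exact H. apply is_RInt_zero. Qed.

Lemma is_RInt_Cmul (f : R -> C) a b l (c : C) : @is_RInt C_R_NormedModule f a b l ->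
  @is_RInt C_R_NormedModule (fun x => Cmult c (f x)) a b (Cmult c l).
Proof.
  intros H. assert (H1 := isC1 _ _ _ _ H). assert (H2 := isC2 _ _ _ _ H).
  apply isC.
  - apply is_RInt_ext with (f := fun x => minus (scal (fst c) (fst (f x))) (scal (snd c) (snd (f x)))).
    + intros x _. destruct c; destruct (f x); simpl. unfold minus, plus, opp, scal; simpl. unfold mult; simpl. ring.
    + replace (fst (c * l)%C) with (minus (scal (fst c) (fst l)) (scal (snd c) (snd l))).
      apply (is_RInt_minus (V:=R_NormedModule)); apply (is_RInt_scal (V:=R_NormedModule)); auto.
      destruct c; destruct l; simpl. unfold minus, plus, opp, scal; simpl. unfold mult; simpl. ring.
  - apply is_RInt_ext with (f := fun x => plus (scal (fst c) (snd (f x))) (scal (snd c) (fst (f x)))).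
    + intros x _. destruct c; destruct (f x); simpl. unfold minus, plus, opp, scal; simpl. unfold mult; simpl. ring.
    + replace (snd (c * l)%C) with (plus (scal (fst c) (snd l)) (scal (snd c) (fst l))).
      apply (is_RInt_plus (V:=R_NormedModule)); apply (is_RInt_scal (V:=R_NormedModule)); auto.
      destruct c; destruct l; simpl. unfold minus, plus, opp, scal; simpl. unfold mult; simpl. ring.
Qed.

Lemma ln_sqrt' X : 0 < X -> ln (sqrt X) = ln X / 2.
Proof.
  intros H. assert (Hs := sqrt_lt_R0 X H).
  assert (ln X = ln (sqrt X * sqrt X)) by (rewrite sqrt_sqrt; lra).
  rewrite ln_mult in H0 by lra. lra.
Qed.

Lemma pos_lin x a : 0 <= x <= 1 -> a < 1 -> 0 < 1 - x * a.
Proof.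
  intros Hx Ha. destruct (Rle_lt_or_eq_dec 0 x (proj1 Hx)) as [H|H].
  - assert (0 < x * (1 - a)) by (apply Rmult_lt_0_compat; lra). lra.
  - subst x. lra.
Qed.

Lemma clog_int (a b : R) : a < 1 ->
  @is_RInt C_R_NormedModule (fun x => Cdiv (a, b) (Cminus (RtoC 1) (Cmult (RtoC x) (a, b)))) 0 1
    (Copp (Clog (Cminus (RtoC 1) (a, b)))).
Proof.
  intros Ha.
  set (D := fun x => (1 - x * a) ^ 2 + (x * b) ^ 2).
  assert (HD : forall x, 0 <= x <= 1 -> 0 < D x).
  { intros x Hx. unfold D. assert (H := pos_lin x a Hx Ha). nra. }
  apply isC.
  - apply is_RInt_ext with (f := fun x => (a - x * (a ^ 2 + b ^ 2)) / D x).
    + intros x Hx. rewrite Rmin_left in Hx by lra. rewrite Rmax_right in Hx by lra.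
      assert (H := HD x ltac:(lra)). unfold D in H |- *. simpl. field. intro Hq. nra.
    + assert (HF := is_RInt_derive (V:=R_CompleteNormedModule) (fun x => - ln (D x) / 2) (fun x => (a - x * (a ^ 2 + b ^ 2)) / D x) 0 1).
      rewrite Rmin_left, Rmax_right in HF by lra.
      replace (fst (- Clog (1 - (a, b)))%C) with (minus (- ln (D 1) / 2) (- ln (D 0) / 2)).
      apply HF.
      * intros x Hx. assert (H := HD x Hx). unfold D in H |- *. auto_derive. auto. field. intro Hq; nra.
      * intros x Hx. assert (H := HD x Hx). apply cont_of_deriv. unfold D in H |- *. auto_derive. intro Hq; nra.
      * unfold D, Clog, Cmod. simpl. rewrite ln_sqrt'.
        2:{ assert (0 < 1 - a) by lra. nra. }
        unfold minus, plus, opp. simpl.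
        replace ((1 - 0 * a) * ((1 - 0 * a) * 1) + 0 * b * (0 * b * 1)) with 1 by ring. rewrite ln_1.
        replace ((1 + - a) * ((1 + - a) * 1) + (0 + - b) * ((0 + - b) * 1)) with ((1 - 1 * a) * ((1 - 1 * a) * 1) + 1 * b * (1 * b * 1)) by ring.
        field.
  - apply is_RInt_ext with (f := fun x => b / D x).
    + intros x Hx. rewrite Rmin_left in Hx by lra. rewrite Rmax_right in Hx by lra.
      assert (H := HD x ltac:(lra)). unfold D in H |- *. simpl. field. intro Hq. nra.
    + assert (HF := is_RInt_derive (V:=R_CompleteNormedModule) (fun x => atan (x * b / (1 - x * a))) (fun x => b / D x) 0 1).
      rewrite Rmin_left, Rmax_right in HF by lra.
      replace (snd (- Clog (1 - (a, b)))%C) with (minus (atan (1 * b / (1 - 1 * a))) (atan (0 * b / (1 - 0 * a)))).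
      apply HF.
      * intros x Hx. assert (H := HD x Hx). assert (H2 := pos_lin x a Hx Ha). unfold D in H |- *. auto_derive. lra. field. split; [lra| intro Hq; nra].
      * intros x Hx. assert (H := HD x Hx). apply cont_of_deriv. unfold D in H |- *. auto_derive. intro Hq; nra.
      * unfold Clog, Carg. simpl. destruct (Rlt_dec 0 (1 + - a)); [|lra].
        unfold minus, plus, opp. simpl. rewrite Rmult_0_l, Rmult_0_l, Rminus_0_r. unfold Rdiv. rewrite Rmult_0_l, atan_0.
        replace ((0 + - b) * / (1 + - a)) with (- (1 * b * / (1 - 1 * a))) by (field; lra).
        rewrite atan_opp. ring.
Qed.

Lemma cmul (f g : R -> R) x : continuous f x -> continuous g x -> continuous (fun y => f y * g y) x.
Proof. intros H1 H2. apply (continuous_mult (U:=R_UniformSpace) (K:=R_AbsRing)); auto. Qed.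

Lemma c1Q x : 0 <= x -> continuous (fun y => 1 + Q y) x.
Proof.
  intros Hx. apply (continuous_plus (U:=R_UniformSpace) (V:=R_NormedModule) (fun _ => 1) Q).
  apply continuous_const.
  apply (continuous_opp (U:=R_UniformSpace) (V:=R_NormedModule) (hh 1)).
  apply hh_cont; lra.
Qed.

Definition Gf (z : C) (x : R) : C :=
  Cdiv (Cplus (RtoC 1) (RtoC (Q x))) (Cminus (RtoC 1) (Cmult (RtoC x) z)).

Lemma exR (f : R -> R) : (forall x, 0 <= x <= 1 -> continuous f x) -> ex_RInt f 0 1.
Proof.
  intros H. apply (ex_RInt_continuous (V:=R_CompleteNormedModule)).
  intros z Hz. rewrite Rmin_left, Rmax_right in Hz by lra. apply H; auto.
Qed.

Lemma isRR (f : R -> R) : (forall x, 0 <= x <= 1 -> continuous f x) -> is_RInt f 0 1 (RInt f 0 1).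
Proof. intros H. apply (RInt_correct (V:=R_CompleteNormedModule)), exR; auto. Qed.

Lemma Gf_ex (a b : R) : a < 1 -> @ex_RInt C_R_NormedModule (Gf (a, b)) 0 1.
Proof.
  intros Ha.
  set (D := fun x => (1 - x * a) ^ 2 + (x * b) ^ 2).
  assert (HD : forall x, 0 <= x <= 1 -> 0 < D x).
  { intros x Hx. unfold D. assert (H := pos_lin x a Hx Ha). nra. }
  set (f1 := fun x => (1 + Q x) * ((1 - x * a) / D x)).
  set (f2 := fun x => (1 + Q x) * ((x * b) / D x)).
  exists (RInt f1 0 1, RInt f2 0 1). apply isC; simpl.
  - apply is_RInt_ext with (f := f1).
    + intros x Hx. rewrite Rmin_left, Rmax_right in Hx by lra.
      assert (H := HD x ltac:(lra)). unfold f1, D in H |- *. simpl. field. intro Hq. nra.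
    + apply isRR. intros x Hx. apply cmul. apply c1Q; lra.
      apply cont_of_deriv. assert (H := HD x Hx). unfold D in H |- *. auto_derive. intro Hq; nra.
  - apply is_RInt_ext with (f := f2).
    + intros x Hx. rewrite Rmin_left, Rmax_right in Hx by lra.
      assert (H := HD x ltac:(lra)). unfold f2, D in H |- *. simpl. field. intro Hq. nra.
    + apply isRR. intros x Hx. apply cmul. apply c1Q; lra.
      apply cont_of_deriv. assert (H := HD x Hx). unfold D in H |- *. auto_derive. intro Hq; nra.
Qed.

Lemma den_nz (z : C) x : fst z < 1 -> 0 <= x <= 1 -> Cminus (RtoC 1) (Cmult (RtoC x) z) <> RtoC 0.
Proof.
  intros Ha Hx H. destruct z as [a b]. apply (f_equal fst) in H. simpl in H.
  assert (H2 := pos_lin x a Hx Ha). lra.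
Qed.

Lemma gamma_eq (z : C) : fst z < 1 -> gamma_fun z = @RInt C_R_CompleteNormedModule (Gf z) 0 1.
Proof.
  intros Ha. unfold gamma_fun. apply (RInt_ext (V:=C_R_CompleteNormedModule)).
  intros x Hx. rewrite Rmin_left, Rmax_right in Hx by lra.
  assert (Hl : ln x <> 0) by (apply ln_neq0; lra).
  assert (Hd := den_nz z x Ha ltac:(lra)).
  unfold gamma_integrand, Gf.
  assert (E : RtoC (1 - x + ln x) = Cmult (Cplus (RtoC 1) (RtoC (Q x))) (RtoC (ln x))).
  { unfold Q, hh. destruct (Rle_dec x 0); [lra|]. destruct (Req_EM_T x 1); [lra|].
    rewrite Rmult_1_l, exp_ln by lra. unfold Cmult, Cplus, RtoC; simpl. f_equal; field; auto. }
  rewrite E. match goal with |- ?A = ?B => change (@eq C A B) end. field. split; auto. intro H. apply Hl. apply (f_equal fst) in H. exact H.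
Qed.

Open Scope C_scope.

Lemma key1 (z X q : C) : 1 - z <> 0 -> 1 - X * z <> 0 ->
  z * ((1 + q) / (1 - X * z)) - z / (1 - X * z) =
  - (- z / (1 - z)) * q / (1 - (- z / (1 - z)) * (1 - X)).
Proof.
  intros H1 H2.
  assert (H3 : 1 - (- z / (1 - z)) * (1 - X) = (1 - X * z) / (1 - z)) by (field; auto).
  rewrite H3. field. auto.
Qed.

Lemma geom (w y q : C) N : 1 - w * y <> 0 ->
  - w * q / (1 - w * y) - sum_n (fun m => - (w ^ (S m)) * (y ^ m * q)) N =
  - (w ^ (S (S N))) * (y ^ (S N) * q) / (1 - w * y).
Proof.
  intros H. induction N as [|N IH].
  - rewrite sum_O. simpl. field. auto.
  - rewrite sum_Sn. change (plus ?A ?B) with (A + B).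
    replace (- w * q / (1 - w * y) - (sum_n (fun m => - (w ^ (S m)) * (y ^ m * q)) N + - w ^ S (S N) * (y ^ S N * q)))
      with ((- w * q / (1 - w * y) - sum_n (fun m => - (w ^ (S m)) * (y ^ m * q)) N) + w ^ S (S N) * (y ^ S N * q)) by ring.
    rewrite IH. change (w ^ S (S (S N))) with (w * w ^ S (S N)). change (y ^ S (S N)) with (y * y ^ S N).
    field. auto.
Qed.

Open Scope R_scope.

Lemma normC (x : C) : @norm _ C_R_NormedModule x = Cmod x.
Proof.
  unfold norm. simpl. unfold prod_norm, Cmod. destruct x as [u v]. simpl.
  f_equal. change (norm u) with (Rabs u). change (norm v) with (Rabs v).
  rewrite !Rmult_1_r, <- !Rabs_mult, !Rabs_right by (apply Rle_ge, Rle_0_sqr). reflexivity.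
Qed.

Lemma pow_le1 r n : 0 <= r <= 1 -> r ^ n <= 1.
Proof.
  intros H. induction n; simpl. lra.
  assert (0 <= r ^ n) by (apply pow_le; lra). nra.
Qed.

Lemma inner1_opp n : inner_sum1 n = - inner_sum2 n.
Proof.
  unfold inner_sum1, inner_sum2.
  transitivity (sum_f_R0 (fun k => ((-1) ^ k * Binomial.C n k * ln (INR k + 1)) * (-1)) n).
  - apply sum_eq. intros i _. rewrite pow_add. ring.
  - rewrite <- scal_sum. ring.
Qed.

Lemma w_bound (z : C) : fst z < 1/2 -> Cmod (Cdiv (Copp z) (Cminus (RtoC 1) z)) < 1.
Proof.
  intros Hz. destruct z as [a b]. simpl in Hz.
  assert (Hnz : Cminus (RtoC 1) (a, b) <> RtoC 0).
  { intro H. apply (f_equal fst) in H. simpl in H. lra. }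
  rewrite Cmod_div by auto. rewrite Cmod_opp.
  assert (Hp : 0 < Cmod (Cminus (RtoC 1) (a, b))) by (apply Cmod_gt_0; auto).
  apply Rlt_div_l; [lra|]. rewrite Rmult_1_l.
  unfold Cmod. simpl. apply sqrt_lt_1.
  - nra. - nra. - nra.
Qed.

Lemma den_w (w : C) (x : R) : Cmod w < 1 -> 0 <= x <= 1 ->
  1 - Cmod w <= Cmod (Cminus (RtoC 1) (Cmult w (RtoC (1 - x)))).
Proof.
  intros Hw Hx.
  assert (H := Cmod_triangle (Cminus (RtoC 1) (Cmult w (RtoC (1 - x)))) (Cmult w (RtoC (1 - x)))).
  replace (Cplus (Cminus (RtoC 1) (Cmult w (RtoC (1 - x)))) (Cmult w (RtoC (1 - x)))) with (RtoC 1) in H by ring.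
  rewrite Cmod_1, Cmod_mult, Cmod_R in H.
  rewrite Rabs_right in H by lra.
  assert (0 <= Cmod w) by apply Cmod_ge_0. nra.
Qed.

Lemma part1 (z : C) : Re z < 1 / 2 ->
  is_series
    (fun m : nat => Cmult (Cpow (Cdiv (Copp z) (Cminus (RtoC 1) z)) (S m))
                          (RtoC (inner_sum1 (S m))))
    (Cplus (Cmult z (gamma_fun z)) (Clog (Cminus (RtoC 1) z))).
Proof.
  intros Hz. unfold Re in Hz.
  set (w := Cdiv (Copp z) (Cminus (RtoC 1) z)).
  assert (Hz1 : Cminus (RtoC 1) z <> RtoC 0).
  { intro H. apply (f_equal fst) in H. simpl in H. lra. }
  assert (Hw : Cmod w < 1) by (apply w_bound; auto).
  rewrite gamma_eq by lra.
  set (J := @RInt C_R_CompleteNormedModule (Gf z) 0 1).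
  assert (HJ : @is_RInt C_R_NormedModule (Gf z) 0 1 J).
  { apply (RInt_correct (V:=C_R_CompleteNormedModule)). destruct z as [a b]. apply Gf_ex. simpl in Hz; lra. }
  assert (HzJ := is_RInt_Cmul _ _ _ _ z HJ).
  assert (HL : @is_RInt C_R_NormedModule (fun x => Cdiv z (Cminus (RtoC 1) (Cmult (RtoC x) z))) 0 1
                 (Copp (Clog (Cminus (RtoC 1) z)))).
  { destruct z as [a b]. apply clog_int. simpl in Hz; lra. }
  set (a := fun m : nat => Cmult (Cpow w (S m)) (RtoC (inner_sum1 (S m)))).
  set (e := fun (m : nat) (x : R) => Cmult (Copp (Cpow w (S m))) (Cmult (Cpow (RtoC (1 - x)) m) (RtoC (Q x)))).
  assert (He : forall m, @is_RInt C_R_NormedModule (e m) 0 1 (a m)).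
  { intros m. unfold e, a.
    assert (H := is_RInt_Cmul _ _ _ _ (Copp (Cpow w (S m))) (is_RInt_RtoC _ _ _ _ (core m))).
    replace (Cmult (Cpow w (S m)) (RtoC (inner_sum1 (S m)))) with
      (Cmult (Copp (Cpow w (S m))) (RtoC (inner_sum2 (S m)))).
    - apply is_RInt_ext with (2 := H). intros x _. rewrite RtoC_mult, RtoC_pow. reflexivity.
    - rewrite inner1_opp, RtoC_opp. ring. }
  assert (HS : forall N, @is_RInt C_R_NormedModule (fun x => sum_n (fun m => e m x) N) 0 1 (sum_n a N)).
  { induction N as [|N IH].
    - apply is_RInt_ext with (f := e 0%nat). intros; rewrite sum_O; reflexivity.
      rewrite sum_O. apply He.
    - apply is_RInt_ext with (f := fun x => plus (sum_n (fun m => e m x) N) (e (S N) x)).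
      intros; rewrite sum_Sn; reflexivity.
      rewrite sum_Sn. apply (is_RInt_plus (V:=C_R_NormedModule)); auto. }
  set (Rn := fun (N : nat) (x : R) => Cdiv (Cmult (Copp (Cpow w (S (S N)))) (Cmult (Cpow (RtoC (1 - x)) (S N)) (RtoC (Q x))))
                                         (Cminus (RtoC 1) (Cmult w (RtoC (1 - x))))).
  assert (Hden : forall x, 0 <= x <= 1 -> Cminus (RtoC 1) (Cmult w (RtoC (1 - x))) <> RtoC 0).
  { intros x Hx H. assert (H2 := den_w w x Hw Hx). rewrite H, Cmod_0 in H2. lra. }
  assert (HR : forall N, @is_RInt C_R_NormedModule (Rn N) 0 1
                 (minus (minus (Cmult z J) (Copp (Clog (Cminus (RtoC 1) z)))) (sum_n a N))).
  { intros N.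
    apply is_RInt_ext with (f := fun x => minus (minus (Cmult z (Gf z x)) (Cdiv z (Cminus (RtoC 1) (Cmult (RtoC x) z)))) (sum_n (fun m => e m x) N)).
    - intros x Hx. rewrite Rmin_left, Rmax_right in Hx by lra.
      change (minus ?A ?B) with (Cminus A B). unfold Gf.
      rewrite key1; auto. 2: apply den_nz; lra.
      rewrite <- RtoC_minus. fold w. unfold Rn, e.
      apply geom. apply Hden; lra.
    - apply (is_RInt_minus (V:=C_R_NormedModule)); auto.
      apply (is_RInt_minus (V:=C_R_NormedModule)); auto. }
  assert (HB : forall N x, 0 <= x <= 1 -> Cmod (Rn N x) <= Cmod w ^ (S (S N)) / (1 - Cmod w)).
  { intros N x Hx. unfold Rn.
    assert (Hd1 := den_w w x Hw Hx).
    rewrite Cmod_div by (apply Hden; auto).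
    rewrite !Cmod_mult, Cmod_opp, !Cmod_pow, !Cmod_R.
    assert (H1 : Rabs (1 - x) ^ (S N) <= 1) by (apply pow_le1; split; [apply Rabs_pos| rewrite Rabs_right; lra]).
    assert (H1' : 0 <= Rabs (1 - x) ^ (S N)) by (apply pow_le, Rabs_pos).
    assert (H2 : Rabs (Q x) <= 1) by (unfold Q; rewrite Rabs_Ropp; apply hh_bound; lra).
    assert (H3 : 0 <= Cmod w ^ (S (S N))) by (apply pow_le, Cmod_ge_0).
    assert (H4 := Rabs_pos (Q x)).
    assert (H5 : Cmod w ^ S (S N) * (Rabs (1 - x) ^ S N * Rabs (Q x)) <= Cmod w ^ S (S N)).
    { assert (Rabs (1 - x) ^ S N * Rabs (Q x) <= 1) by nra. nra. }
    unfold Rdiv. apply Rmult_le_compat; auto.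
    - apply Rmult_le_pos; auto. apply Rmult_le_pos; auto.
    - left. apply Rinv_0_lt_compat. lra.
    - apply Rinv_le_contravar; lra. }
  unfold is_series. apply filterlim_locally. intros eps.
  assert (Hw0 : 0 < 1 - Cmod w) by lra.
  destruct (pow_lt_1_zero (Cmod w) ltac:(rewrite Rabs_right; [lra|apply Rle_ge, Cmod_ge_0]) (eps * (1 - Cmod w)))
    as [N0 HN0].
  { apply Rmult_lt_0_compat; [apply cond_pos|lra]. }
  exists N0. intros N HN.
  apply (norm_compat1 (V:=C_NormedModule)).
  assert (HI : @norm _ C_R_NormedModule (minus (minus (Cmult z J) (Copp (Clog (Cminus (RtoC 1) z)))) (sum_n a N))
     <= (1 - 0) * (Cmod w ^ (S (S N)) / (1 - Cmod w))).
  { apply (norm_RInt_le_const (V:=C_R_NormedModule) (Rn N) 0 1); [lra| intros x Hx; rewrite normC; apply HB; auto | apply HR]. }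
  rewrite normC in HI.
  change (@norm _ C_NormedModule ?X) with (Cmod X).
  change (@minus _ ?A ?B) with (Cminus A B).
  change (@minus _ (minus ?A ?B) ?C) with (Cminus (Cminus A B) C) in HI.
  apply Rle_lt_trans with (Cmod (Cminus (Cminus (Cmult z J) (Copp (Clog (Cminus (RtoC 1) z)))) (sum_n a N))).
  { right. rewrite <- Cmod_opp. f_equal. match goal with |- ?A = ?B => change (@eq C A B) end. change (@sum_n (NormedModule.AbelianMonoid C_AbsRing C_NormedModule) a N) with (@sum_n C_AbelianMonoid a N). ring. }
  eapply Rle_lt_trans; [apply HI|].
  specialize (HN0 (S (S N)) ltac:(lia)). rewrite Rabs_right in HN0 by (apply Rle_ge, pow_le, Cmod_ge_0).
  rewrite Rminus_0_r, Rmult_1_l. apply Rlt_div_l; lra.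
Qed.

Lemma Clog_inv (u : C) : 0 < fst u -> Clog (Cinv u) = Copp (Clog u).
Proof.
  intros Hu. destruct u as [c d]. simpl in Hu.
  assert (Hn : (c, d) <> RtoC 0) by (intro H; apply (f_equal fst) in H; simpl in H; lra).
  assert (Hm : 0 < Cmod (c, d)) by (apply Cmod_gt_0; auto).
  assert (HD : 0 < c ^ 2 + d ^ 2) by nra.
  unfold Clog. rewrite Cmod_inv by auto. rewrite ln_Rinv by auto.
  unfold Carg. simpl.
  destruct (Rlt_dec 0 (c / (c * (c * 1) + d * (d * 1)))) as [H1|H1].
  2:{ exfalso. apply H1. apply Rdiv_lt_0_compat; nra. }
  destruct (Rlt_dec 0 c) as [H2|H2]; [|lra].
  unfold Copp. simpl. f_equal.
  replace (- d / (c * (c * 1) + d * (d * 1)) / (c / (c * (c * 1) + d * (d * 1)))) with (- (d / c)).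
  apply atan_opp. field. split; [lra|]. intro Hq. nra.
Qed.

Lemma part2 (w : C) : Cmod w < 1 ->
     exists s : C,
       is_series (fun m : nat => Cmult (Cpow w (S m)) (RtoC (inner_sum2 (S m)))) s /\
       Cmult w (gamma_fun (Cdiv (Copp w) (Cminus (RtoC 1) w))) =
       Cplus (Copp (Cmult (Cminus (RtoC 1) w) (Clog (Cminus (RtoC 1) w))))
             (Cmult (Cminus (RtoC 1) w) s).
Proof.
  intros Hw.
  assert (Hre : Rabs (fst w) < 1) by (eapply Rle_lt_trans; [apply re_le_Cmod|exact Hw]).
  apply Rabs_def2 in Hre.
  assert (Hw1 : Cminus (RtoC 1) w <> RtoC 0) by (intro H; apply (f_equal fst) in H; simpl in H; lra).
  set (z := Cdiv (Copp w) (Cminus (RtoC 1) w)).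
  assert (Hz : Re z < 1 / 2).
  { unfold z. destruct w as [p q]. simpl in Hre.
    assert (Hpq : p ^ 2 + q ^ 2 < 1).
    { unfold Cmod in Hw. simpl in Hw. rewrite <- sqrt_1 in Hw at 3. apply sqrt_lt_0_alt in Hw. simpl. lra. }
    assert (HD : 0 < (1 - p) ^ 2 + q ^ 2) by nra.
    unfold Re. simpl.
    replace (- p * ((1 + - p) / ((1 + - p) * ((1 + - p) * 1) + (0 + - q) * ((0 + - q) * 1))) -
             - q * (- (0 + - q) / ((1 + - p) * ((1 + - p) * 1) + (0 + - q) * ((0 + - q) * 1))))
      with ((p ^ 2 + q ^ 2 - p) / ((1 - p) ^ 2 + q ^ 2)) by (field; intro Hq; nra).
    apply Rlt_div_l; nra. }
  assert (Ez : Cdiv (Copp z) (Cminus (RtoC 1) z) = w).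
  { unfold z. field. cbv beta. split; [exact Hw1|]. intro H. apply (f_equal fst) in H. simpl in H. lra. }
  assert (El : Clog (Cminus (RtoC 1) z) = Copp (Clog (Cminus (RtoC 1) w))).
  { rewrite <- Clog_inv by (simpl; lra). f_equal. unfold z. field. auto. }
  assert (H := part1 z Hz). rewrite Ez in H.
  exists (Copp (Cplus (Cmult z (gamma_fun z)) (Clog (Cminus (RtoC 1) z)))). split.
  - apply is_series_ext with (a := fun m => opp (Cmult (Cpow w (S m)) (RtoC (inner_sum1 (S m))))).
    + intros m. rewrite inner1_opp, RtoC_opp. change (opp ?A) with (Copp A). match goal with |- ?A = ?B => change (@eq C A B) end. ring.
    + apply (is_series_opp (K:=C_AbsRing) (V:=C_NormedModule)). exact H.
  - fold z. rewrite El. set (g := gamma_fun z). unfold z. match goal with |- ?A = ?B => change (@eq C A B) end. field. auto.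
Qed.

Theorem theorem9 :
  (forall z : C, Re z < 1 / 2 ->
     is_series
       (fun m : nat => Cmult (Cpow (Cdiv (Copp z) (Cminus (RtoC 1) z)) (S m))
                             (RtoC (inner_sum1 (S m))))
       (Cplus (Cmult z (gamma_fun z)) (Clog (Cminus (RtoC 1) z))))
  /\
  (forall w : C, Cmod w < 1 ->
     exists s : C,
       is_series (fun m : nat => Cmult (Cpow w (S m)) (RtoC (inner_sum2 (S m)))) s /\
       Cmult w (gamma_fun (Cdiv (Copp w) (Cminus (RtoC 1) w))) =
       Cplus (Copp (Cmult (Cminus (RtoC 1) w) (Clog (Cminus (RtoC 1) w))))
             (Cmult (Cminus (RtoC 1) w) s)).
Proof. split. exact part1. exact part2. Qed.
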